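(* Let $P$ be a Delzant polyhedron, $v$ a weight with $(v,w)\in\mathcal W(P)$, and let $\mathbf H=(H_{ij})$ satisfy the conditions defining $\mathcal H^\varepsilon_{\alpha,T}$. Then there is $C>0$ such that for all $i,j$, $$\sup_P\Big(v^{\varepsilon-1}\sum_k|(vH_{ij})_k|\Big)<C,$$ and in particular for every $j$, $\sup_P\big(v^{\varepsilon-1}\sum_i|(vH_{ij})_i|\big)<C$.
   Context: $\mathfrak t^*\cong\mathbb R^n$; $P$ a Delzant polyhedron (possibly unbounded); $P_\delta$ the inner parallel polyhedron at distance $\delta$; $\mathbf H=(H_{ij})$ a positive-definite matrix-valued function on $P$ (e.g. $(\mathrm{Hess}\,u)^{-1}$ for the symplectic potential $u$ of an AK metric); subscripts denote $x$-derivatives. $\mathcal W(P)$: $v>0$ smooth on $\overline P$, $|v|\le C_1e^{-C_2|x|}$, $\sum_{|a|\le k}|v^{-1}\partial^av|\le C(k)$; and $\sum_{|a|\le k}\sup|v^{-\beta^*}\partial^aw|\le C_3(k)$ for some $\beta^*>0$. Conditions of $\mathcal H^\varepsilon_{\alpha,T}$ ($\varepsilon\in[0,\min\{\beta^*,\frac12\})$): (1) $\sup_Pv^\varepsilon\|\mathbf H\|^2<\infty$; (2) $\sup_Pv^\varepsilon\sum_{i,j,k}|\partial_kH_{ij}|^2<\infty$; (3) $|\partial_k\partial_lH_{ij}|^2<C$ on $\overline P\setminus P_{\bar\delta}$ for some $\bar\delta>0$; (4) $\sup|v^\varepsilon u|<\infty$ on $\overline P$ and $\sum_{|a|\le2}\sup_{P_\delta}|v^\varepsilon\partial^au|<\infty$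 for small $\delta$, where $\mathbf H=(\mathrm{Hess}\,u)^{-1}$. *)

(* Defs.v *)
From HB Require Import structures.
From mathcomp Require Import all_boot all_order all_algebra.
From mathcomp Require Import all_classical all_reals all_analysis.
Set Implicit Arguments. Unset Strict Implicit. Unset Printing Implicit Defensive.
Import Order.TTheory GRing.Theory Num.Theory.
Import numFieldNormedType.Exports.
Local Open Scope classical_set_scope.
Local Open Scope ring_scope.

Section Defs.
Variables (R : realType) (n : nat).
Notation pt := 'rV[R]_n.

Definition partial (i : 'I_n) (f : pt -> R) : pt -> R :=
  fun x => 'D_(delta_mx 0 i) f x.

Definition dseq (s : seq 'I_n) (f : pt -> R) : pt -> R :=
  foldr partial f s.

Definition dmulti (a : 'I_n -> nat) (f : pt -> R) : pt -> R :=
  foldr (fun i g => iter (a i) (partial i) g) f (enum 'I_n).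

Definition smooth_on (U : set pt) (f : pt -> R) : Prop :=
  open U /\ forall (s : seq 'I_n) (x : pt), U x -> differentiable (dseq s f) x.

Definition smooth_on_closed (A : set pt) (f : pt -> R) : Prop :=
  exists U : set pt, A `<=` U /\ smooth_on U f.

Definition eucl (x : pt) : R := Num.sqrt (\sum_i (x 0 i) ^+ 2).

Definition Hess (f : pt -> R) (x : pt) : 'M[R]_n :=
  \matrix_(i, j) partial i (partial j f) x.

Definition posdef (M : 'M[R]_n) : Prop :=
  M^T = M /\ forall z : 'rV[R]_n, z != 0 -> 0 < (z *m M *m z^T) 0 0.

Variables (d : nat) (u : 'I_d -> 'rV[int]_n) (lam : 'I_d -> R).

Definition pair (x : pt) (l : 'I_d) : R := \sum_i x 0 i * ((u l) 0 i)%:~R.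

Definition Ppoly : set pt := [set x | forall l, lam l < pair x l].

Definition normu (l : 'I_d) : R := Num.sqrt (\sum_i (((u l) 0 i)%:~R : R) ^+ 2).

(* inner parallel polyhedron at distance delta *)
Definition Pdelta (delta : R) : set pt :=
  [set x | forall l, lam l + delta * normu l < pair x l].

(* Delzant polyhedron: nonempty, every inequality defines a facet, and at every
   point of the closure the normals of the active facets extend to a Z-basis. *)
Definition delzant : Prop :=
  Ppoly !=set0 /\
  (forall l, exists x, pair x l = lam l /\ forall l', l' != l -> lam l' < pair x l') /\
  (forall x, closure Ppoly x ->
     exists (M : 'M[int]_n) (f : 'I_d -> 'I_n),
       M \in unitmx /\
       {in [pred l | pair x l == lam l] &, injective f} /\
       forall l, pair x l = lam l -> row (f l) M = u l).

Definition inW (v w : pt -> R) (betastar : R) : Prop :=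
  smooth_on_closed (closure Ppoly) v /\ smooth_on_closed (closure Ppoly) w /\
  (forall x, closure Ppoly x -> 0 < v x) /\
  (exists C1 C2 : R, 0 < C1 /\ 0 < C2 /\
     forall x, closure Ppoly x -> `|v x| <= C1 * expR (- C2 * eucl x)) /\
  (forall k : nat, exists Ck : R, forall x, closure Ppoly x ->
     \sum_(a : {ffun 'I_n -> 'I_k.+1} | (\sum_i (a i : nat) <= k)%N)
        `|(v x)^-1 * dmulti (fun i => a i : nat) v x| <= Ck) /\
  0 < betastar /\
  (forall k : nat, exists C3k : R,
     \sum_(a : {ffun 'I_n -> 'I_k.+1} | (\sum_i (a i : nat) <= k)%N)
        (sup [set `|(v x) `^ (- betastar) * dmulti (fun i => a i : nat) w x|
              | x in closure Ppoly]) <= C3k /\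
     forall (a : {ffun 'I_n -> 'I_k.+1}), (\sum_i (a i : nat) <= k)%N ->
       has_ubound [set `|(v x) `^ (- betastar) * dmulti (fun i => a i : nat) w x|
              | x in closure Ppoly]).

Definition inHeps (v : pt -> R) (eps : R) (H : pt -> 'M[R]_n) (upot : pt -> R) : Prop :=
  smooth_on Ppoly upot /\
  (forall x, Ppoly x -> H x = invmx (Hess upot x) /\ posdef (H x)) /\
  (* (1) *)
  (exists C, forall x, Ppoly x -> (v x) `^ eps * \sum_i \sum_j (H x i j) ^+ 2 <= C) /\
  (* (2) *)
  (exists C, forall x, Ppoly x ->
     (v x) `^ eps * \sum_i \sum_j \sum_k (partial k (fun y => H y i j) x) ^+ 2 <= C) /\
  (* (3) *)
  (exists dbar : R, 0 < dbar /\ exists C, forall x,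
     closure Ppoly x -> ~ Pdelta dbar x -> forall i j k l,
       (partial k (partial l (fun y => H y i j)) x) ^+ 2 < C) /\
  (* (4) *)
  (exists C, forall x, closure Ppoly x -> `|(v x) `^ eps * upot x| <= C) /\
  (exists delta0 : R, 0 < delta0 /\ forall delta, 0 < delta < delta0 ->
     exists C, forall x, Pdelta delta x ->
       \sum_(a : {ffun 'I_n -> 'I_3} | (\sum_i (a i : nat) <= 2)%N)
          `|(v x) `^ eps * dmulti (fun i => a i : nat) upot x| <= C).

End Defs.

(* Main.v *)
Require Import Defs.
From HB Require Import structures.
From mathcomp Require Import all_boot all_order all_algebra.
From mathcomp Require Import all_classical all_reals all_analysis.
From mathcomp.algebra_tactics Require Import ring lra.
Import Order.TTheory GRing.Theory Num.Theory.
Import numFieldNormedType.Exports.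
Local Open Scope classical_set_scope.
Local Open Scope ring_scope.

Lemma diff_bsum (R : realType) (V : normedModType R) (I : Type) (r : seq I) (P : pred I)
  (F : I -> V -> R) (x : V) :
  (forall i, differentiable (F i) x) ->
  differentiable (fun y => \sum_(i <- r | P i) F i y) x.
Proof.
move=> HF; elim: r => [|a r IH].
  have -> : (fun y : V => \sum_(i <- [::] | P i) F i y) = cst 0.
    by apply: funext => y; rewrite big_nil.
  exact: differentiable_cst.
case Pa: (P a).
  have -> : (fun y : V => \sum_(i <- a :: r | P i) F i y) =
     (F a + (fun y => \sum_(i <- r | P i) F i y))%R.
    by apply: funext => y; rewrite big_cons Pa.
  exact: differentiableD.
have -> : (fun y : V => \sum_(i <- a :: r | P i) F i y) =
     (fun y => \sum_(i <- r | P i) F i y).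
  by apply: funext => y; rewrite big_cons Pa.
exact: IH.
Qed.

Lemma diff_bprod (R : realType) (V : normedModType R) (I : Type) (r : seq I) (P : pred I)
  (F : I -> V -> R) (x : V) :
  (forall i, differentiable (F i) x) ->
  differentiable (fun y => \prod_(i <- r | P i) F i y) x.
Proof.
move=> HF; elim: r => [|a r IH].
  have -> : (fun y : V => \prod_(i <- [::] | P i) F i y) = cst 1.
    by apply: funext => y; rewrite big_nil.
  exact: differentiable_cst.
case Pa: (P a).
  have -> : (fun y : V => \prod_(i <- a :: r | P i) F i y) =
     (F a * (fun y => \prod_(i <- r | P i) F i y))%R.
    by apply: funext => y; rewrite big_cons Pa.
  exact: differentiableM.
have -> : (fun y : V => \prod_(i <- a :: r | P i) F i y) =
     (fun y => \prod_(i <- r | P i) F i y).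
  by apply: funext => y; rewrite big_cons Pa.
exact: IH.
Qed.

Lemma diff_cstM (R : realType) (V : normedModType R) (c : R) (f : V -> R) x :
  differentiable f x -> differentiable (fun y => c * f y) x.
Proof.
move=> Hf; have -> : (fun y => c * f y) = (cst c * f)%R by [].
exact: differentiableM.
Qed.

Lemma diff_det (R : realType) (V : normedModType R) (m : nat) (F : V -> 'M[R]_m) x :
  (forall a b, differentiable (fun y => F y a b) x) ->
  differentiable (fun y => \det (F y)) x.
Proof.
move=> HF; rewrite /determinant.
apply: diff_bsum => s; apply: diff_cstM; exact: diff_bprod.
Qed.

Lemma diff_adj (R : realType) (V : normedModType R) (m : nat) (F : V -> 'M[R]_m) x i j :
  (forall a b, differentiable (fun y => F y a b) x) ->
  differentiable (fun y => \adj (F y) i j) x.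
Proof.
move=> HF.
have -> : (fun y => \adj (F y) i j) = (fun y => cofactor (F y) j i).
  by apply: funext => y; rewrite mxE.
rewrite /cofactor; apply: diff_cstM; apply: diff_det => a b.
have -> : (fun y => row' j (col' i (F y)) a b) = (fun y => F y (lift j a) (lift i b)).
  by apply: funext => y; rewrite !mxE.
exact: HF.
Qed.

Lemma posdef_unit (R : realType) (n : nat) (M : 'M[R]_n) : posdef M -> M \in unitmx.
Proof.
move=> [_ Hp]; apply: contraT => nu.
have : kermx M != 0 by rewrite kermx_eq0 row_free_unit.
apply: contraNT => _; apply/eqP/row_matrixP => i; rewrite row0.
apply/eqP; apply: contraT => nz; have := Hp _ nz.
by rewrite -row_mul mulmx_ker row0 mul0mx mxE ltxx.
Qed.

Lemma foldr_one (R : realType) (n : nat) (k : 'I_n) (b : 'I_n -> nat) (f : 'rV[R]_n -> R)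
  (s : seq 'I_n) : uniq s -> (forall i, b i = (i == k) :> nat) ->
  foldr (fun i g => iter (b i) (partial i) g) f s = if k \in s then partial k f else f.
Proof.
move=> + Hb; elim: s => [|a s IH] //= /andP[nas us].
rewrite IH // Hb in_cons; case: (eqVneq a k) => [ak|ne] /=.
  by subst a; rewrite (negbTE nas).
done.
Qed.

Lemma dmulti_one (R : realType) (n : nat) (k : 'I_n) (b : 'I_n -> nat) (f : 'rV[R]_n -> R) :
  (forall i, b i = (i == k) :> nat) -> dmulti b f = partial k f.
Proof.
move=> Hb; rewrite /dmulti (@foldr_one R n k b f _ (enum_uniq _) Hb) mem_enum //.
Qed.

Lemma H_derivable (R : realType) (n d : nat) (u : 'I_d -> 'rV[int]_n) (lam : 'I_d -> R)
  (H : 'rV[R]_n -> 'M[R]_n) (upot : 'rV[R]_n -> R) x i j (e : 'rV[R]_n) :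
  smooth_on (Ppoly u lam) upot ->
  (forall y, Ppoly u lam y -> H y = invmx (Hess upot y) /\ posdef (H y)) ->
  Ppoly u lam x -> derivable (fun y => H y i j) x e.
Proof.
move=> [Hop Hsm] HH Px.
have Hun : forall y, Ppoly u lam y -> Hess upot y \in unitmx.
  move=> y Py; have [E Pd] := HH y Py.
  apply: contraT => nu; move: Pd; rewrite E /invmx (negbTE nu) => Pd.
  by move: nu; rewrite posdef_unit.
pose g := fun y => (\det (Hess upot y))^-1 * \adj (Hess upot y) i j.
have Hent : forall a b, differentiable (fun y => Hess upot y a b) x.
  move=> a b.
  have -> : (fun y => Hess upot y a b) = dseq [:: a; b] upot.
    by apply: funext => y; rewrite mxE.
  exact: Hsm.
have Hdg : differentiable g x.
  apply: differentiableM; last exact: diff_adj.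
  apply: differentiableV; first exact: diff_det.
  by rewrite -unitfE -unitmxE Hun.
apply: (near_eq_derivable (f:=g)); last exact: diff_derivable.
have Hn : \forall y \near x, Ppoly u lam y by apply: Hop.
apply: filterS Hn => y Py.
have [E _] := HH y Py.
by rewrite E /invmx (Hun y Py) mxE.
Qed.
Lemma le_term_sum (R : realType) (I : finType) (P : pred I) (F : I -> R) i :
  (forall j, 0 <= F j) -> P i -> F i <= \sum_(j | P j) F j.
Proof.
move=> F0 Pi; rewrite (bigD1 i) //= lerDl; exact: sumr_ge0.
Qed.

Lemma le_term_sumT (R : realType) (I : finType) (F : I -> R) i :
  (forall j, 0 <= F j) -> F i <= \sum_j F j.
Proof.
move=> F0; rewrite (bigD1 i) //= lerDl; exact: sumr_ge0.
Qed.

Lemma t_le (R : realType) (t K : R) : t ^+ 2 <= K -> t <= 1 + K.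
Proof. move=> h; nra. Qed.

Theorem lemma3p5 (R : realType) (n d : nat) (u : 'I_d -> 'rV[int]_n) (lam : 'I_d -> R)
  (v w : 'rV[R]_n -> R) (H : 'rV[R]_n -> 'M[R]_n) (upot : 'rV[R]_n -> R)
  (eps betastar : R) :
  delzant u lam ->
  inW u lam v w betastar ->
  0 <= eps -> eps < Num.min betastar (1 / 2) ->
  inHeps u lam v eps H upot ->
  exists C : R, 0 < C /\
    (forall i j : 'I_n, exists M : R, M < C /\
       forall x, Ppoly u lam x ->
         (v x) `^ (eps - 1) * \sum_k `|partial k (fun y => v y * H y i j) x| <= M) /\
    (forall j : 'I_n, exists M : R, M < C /\
       forall x, Ppoly u lam x ->
         (v x) `^ (eps - 1) * \sum_i `|partial i (fun y => v y * H y i j) x| <= M).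
Proof.
move=> _ [[U [sU [oU HU]]] [_ [Hpos [[C1 [C2 [C1p [C2p Hexp]]]] [Hder _]]]]] e0 elt.
move=> [Hsm [HH [[K1 HK1] [[K2 HK2] _]]]].
have [D1 HD1] := Hder 1%N.
have e1 : eps <= 1.
  move: elt; rewrite lt_min => /andP[_ h]; apply: ltW; apply: (lt_le_trans h).
  by rewrite ler_pdivrMr // mul1r ler1n.
set A := Num.max 1 C1.
set Tb := (1 + A * K2) + (1 + A * K1) * D1.
have key : forall x i j k, Ppoly u lam x ->
    (v x) `^ (eps - 1) * `|partial k (fun y => v y * H y i j) x| <= Tb.
  move=> x i j k Px.
  have cPx : closure (Ppoly u lam) x by apply: subset_closure.
  set a := v x.
  have a0 : 0 < a by apply: Hpos.
  have aC : a <= C1.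
    apply: (le_trans (ler_norm a)); apply: (le_trans (Hexp x cPx)).
    rewrite -[leRHS]mulr1 ler_wpM2l //.
      exact: ltW.
    rewrite expR_le1 mulNr oppr_le0; apply: mulr_ge0; [exact: ltW | rewrite /eucl; exact: sqrtr_ge0].
  set pe := a `^ eps.
  have pe0 : 0 <= pe by apply: powR_ge0.
  have peA : pe <= A.
    have A1 : 1 <= A by rewrite le_max lexx.
    have C1A : C1 <= A by rewrite le_max lexx orbT.
    have [a1|a1] := lerP a 1.
      apply: (le_trans _ A1).
      rewrite /pe -(powRr0 a); apply: ger_powR => //; by rewrite a0 a1.
    apply: (le_trans _ (le_trans aC C1A)).
    by apply: ler1_powR => //; apply: ltW.
  have A0 : 0 <= A by rewrite le_max ler01.
  set h := H x i j.
  set hk := partial k (fun y => H y i j) x.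
  set vk := partial k v x.
  have Hh : pe * h ^+ 2 <= K1.
    apply: le_trans (HK1 x Px).
    rewrite ler_wpM2l //.
    apply: le_trans (@le_term_sumT R _ (fun i0 => \sum_j0 H x i0 j0 ^+ 2) i _); last first.
      by move=> i0; apply: sumr_ge0 => j0 _; apply: sqr_ge0.
    apply: le_trans (@le_term_sumT R _ (fun j0 => H x i j0 ^+ 2) j _) => //.
    by move=> j0; apply: sqr_ge0.
  have Hhk : pe * hk ^+ 2 <= K2.
    apply: le_trans (HK2 x Px).
    rewrite ler_wpM2l //.
    apply: le_trans (@le_term_sumT R _ (fun i0 => \sum_j0 \sum_k0 partial k0 (fun y => H y i0 j0) x ^+ 2) i _); last first.
      by move=> i0; apply: sumr_ge0 => j0 _; apply: sumr_ge0 => k0 _; apply: sqr_ge0.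
    apply: le_trans (@le_term_sumT R _ (fun j0 => \sum_k0 partial k0 (fun y => H y i j0) x ^+ 2) j _); last first.
      by move=> j0; apply: sumr_ge0 => k0 _; apply: sqr_ge0.
    apply: le_trans (@le_term_sumT R _ (fun k0 => partial k0 (fun y => H y i j) x ^+ 2) k _) => //.
    by move=> k0; apply: sqr_ge0.
  have Hvk : `|a^-1 * vk| <= D1.
    apply: le_trans (HD1 x cPx).
    pose b : {ffun 'I_n -> 'I_2} := [ffun i0 => if i0 == k then ord_max else ord0].
    have Hb : forall i0, (fun i1 => nat_of_ord (b i1)) i0 = (i0 == k) :> nat.
      by move=> i0; rewrite /b ffunE; case: (i0 == k).
    have Pb : (\sum_i0 (b i0 : nat) <= 1)%N.
      rewrite (bigD1 k) //= big1 ?addn0; first by rewrite ffunE eqxx.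
      by move=> i0 ne; rewrite ffunE (negbTE ne).
    apply: le_trans (@le_term_sum R _ _ (fun a0 : {ffun 'I_n -> 'I_2} => `|(v x)^-1 * dmulti (fun i0 => a0 i0 : nat) v x|) b _ Pb); last first.
      by move=> c; apply: normr_ge0.
    by rewrite (@dmulti_one R n k _ v Hb).
  have dv : derivable v x (delta_mx 0 k).
    apply: diff_derivable; exact: (HU [::] x (sU x cPx)).
  have dH : derivable (fun y => H y i j) x (delta_mx 0 k).
    exact: (@H_derivable R n d u lam H upot x i j _ Hsm HH Px).
  have Dk : partial k (fun y => v y * H y i j) x = a * hk + h * vk.
    rewrite /partial.
    have -> : (fun y => v y * H y i j) = (v * (fun y => H y i j))%R by [].
    by rewrite deriveM.
  rewrite Dk.
  have ane : a != 0 by rewrite (gt_eqF a0).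
  have -> : a `^ (eps - 1) = pe * a^-1.
    by rewrite powRB ?ane ?implybT // powRr1 // ltW.
  set P1 := pe * `|hk|. set Q := pe * `|h|. set Y := a^-1 * `|vk|.
  have ia : 0 <= a^-1 by rewrite invr_ge0 ltW.
  rewrite normrM (ger0_norm ia) in Hvk.
  have Q0 : 0 <= Q by rewrite /Q mulr_ge0.
  have Y0 : 0 <= Y by rewrite /Y mulr_ge0 // invr_ge0 ltW.
  have HQ : Q <= 1 + A * K1.
    apply: t_le.
    have -> : Q ^+ 2 = pe * (pe * h ^+ 2) by rewrite /Q exprMn real_normK ?num_real // expr2 mulrA.
    have s0 : 0 <= pe * h ^+ 2 by rewrite mulr_ge0 // sqr_ge0.
    move: s0 Hh peA pe0 A0; set s := pe * h ^+ 2; move=> s0 Hh' peA' pe0' A0'. nra.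
  have HP1 : P1 <= 1 + A * K2.
    apply: t_le.
    have -> : P1 ^+ 2 = pe * (pe * hk ^+ 2) by rewrite /P1 exprMn real_normK ?num_real // expr2 mulrA.
    have s0 : 0 <= pe * hk ^+ 2 by rewrite mulr_ge0 // sqr_ge0.
    move: s0 Hhk peA pe0 A0; set s := pe * hk ^+ 2; move=> s0 Hh' peA' pe0' A0'. nra.
  have step : pe * a^-1 * `|a * hk + h * vk| <= P1 + Q * Y.
    have Hn := ler_normD (a * hk) (h * vk).
    rewrite !normrM (gtr0_norm a0) in Hn.
    have pa : 0 <= pe * a^-1 by rewrite mulr_ge0 // invr_ge0 ltW.
    apply: le_trans (ler_wpM2l pa Hn) _.
    rewrite /P1 /Q /Y; suff -> : pe / a * (a * `|hk| + `|h| * `|vk|) = pe * `|hk| + pe * `|h| * (a^-1 * `|vk|) by []. by field.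
  apply: le_trans step _.
  rewrite /Tb. have D0 : 0 <= D1 by exact: (le_trans Y0 Hvk).
  have h1 : Q * Y <= Q * D1 by rewrite ler_wpM2l.
  have h2 : Q * D1 <= (1 + A * K1) * D1 by rewrite ler_wpM2r.
  lra.
have M0 : 0 <= Num.max 0 (Tb *+ n) by rewrite le_max lexx.
have Hs : forall (F : 'I_n -> R) x, (forall k, (v x) `^ (eps - 1) * `|F k| <= Tb) ->
    (v x) `^ (eps - 1) * \sum_k `|F k| <= Num.max 0 (Tb *+ n).
  move=> F x HF; rewrite mulr_sumr.
  apply: le_trans (_ : _ <= \sum_(k < n) Tb) _.
    by apply: ler_sum => k _; exact: HF.
  by rewrite sumr_const card_ord le_max lexx orbT.
exists (Num.max 0 (Tb *+ n) + 1); split; first lra.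
split.
  move=> i j; exists (Num.max 0 (Tb *+ n)); split; first lra.
  by move=> x Px; apply: Hs => k; apply: key.
move=> j; exists (Num.max 0 (Tb *+ n)); split; first lra.
by move=> x Px; apply: Hs => k; apply: key.
Qed.
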